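(* Let $r>1$ be a real number and let $p=T^3+rT^2+T+r$ over $\mathbb T$. Then a polynomial $q'$ over $\mathbb T$ satisfies $p\in(T+r)\boxdot q'$ if and only if $q'=T^2+sT+1$ for some $s\in[0,r^{-1}]$. In particular $T^2+T+1$ (whose coefficients are the elementary symmetric expressions $\max\{a_1,a_2\}$, $a_1a_2$ in the other roots $a_1=a_2=1$) is not such a quotient.
   Context: The tropical hyperfield $\mathbb T$ is $\mathbb R_{\ge0}$ with usual multiplication and hyperaddition $a\boxplus b=\{\max\{a,b\}\}$ if $a\ne b$, $a\boxplus a=[0,a]$ (so $c\in a\boxplus b$ iff the maximum of $a,b,c$ is attained at least twice). Polynomials over $\mathbb T$ are finitely supported sequences $\sum c_iT^i$; the hyperproduct is $p\boxdot q=\{\sum e_iT^i : e_i\in \boxplus_{k+l=i} c_kd_l\}$, with iterated sums $\boxplus_{i=1}^n a_i=\bigcup_{b\in\boxplus_{i=1}^{n-1}a_i} b\boxplus a_n$. *)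

(* Defs.v *)
(* the tropical hyperfield T = R_{>=0} with Stdlib reals. *)
From Stdlib Require Import Reals List.
Open Scope R_scope.

Definition hplus_mem (a b c : R) : Prop :=
  (a <> b /\ c = Rmax a b) \/ (a = b /\ 0 <= c <= a).

Fixpoint hsum_mem (f : nat -> R) (n : nat) (c : R) : Prop :=
  match n with
  | O => c = 0
  | S m => exists b, hsum_mem f m b /\ hplus_mem b (f m) c
  end.

(* Polynomials over T: finitely supported sequences of nonnegative reals;
   coefficient i is the coefficient of T^i. *)
Definition tpoly := nat -> R.

Definition is_tpoly (p : tpoly) : Prop :=
  (forall i, 0 <= p i) /\ exists N, forall i, (N <= i)%nat -> p i = 0.

(* Polynomial from its coefficient list, constant term first. *)
Definition mkpoly (l : list R) : tpoly := fun i => nth i l 0.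

Definition hprod_mem (p q e : tpoly) : Prop :=
  forall i, hsum_mem (fun k => p k * q (i - k)%nat) (S i) (e i).

(* Main.v *)
Require Import Defs.
From Stdlib Require Import Reals List Lra Lia FunctionalExtensionality.
Import ListNotations.
Open Scope R_scope.

Lemma hsum_nonneg f n c : (forall k, 0 <= f k) -> hsum_mem f n c -> 0 <= c.
Proof.
  intros Hf; revert c; induction n as [|n IH]; simpl; intros c H.
  - lra.
  - destruct H as [b [Hb [[_ ->]|[_ H]]]].
    + pose proof (IH b Hb). pose proof (Hf n). pose proof (Rmax_l b (f n)). lra.
    + lra.
Qed.

Lemma hplus_zero_r b c : 0 <= b -> (hplus_mem b 0 c <-> c = b).
Proof.
  intros Hb; unfold hplus_mem; split.
  - intros [[_ ->]|[-> H]]; [apply Rmax_left; lra| lra].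
  - intros ->. destruct (Req_dec b 0) as [->|Hn].
    + right; lra.
    + left; split; [auto| symmetry; apply Rmax_left; lra].
Qed.

Lemma hplus_zero_l a c : 0 <= a -> (hplus_mem 0 a c <-> c = a).
Proof.
  intros Ha; unfold hplus_mem; split.
  - intros [[_ ->]|[<- H]]; [apply Rmax_right; lra| lra].
  - intros ->. destruct (Req_dec a 0) as [->|Hn].
    + right; lra.
    + left; split; [auto| symmetry; apply Rmax_right; lra].
Qed.

Lemma hsum_tail f m c : (forall k, 0 <= f k) -> (forall k, f (2 + k)%nat = 0) ->
  (hsum_mem f (2 + m) c <-> hsum_mem f 2 c).
Proof.
  intros Hf Hz; revert c; induction m as [|m IH]; intros c; [tauto|].
  replace (2 + S m)%nat with (S (2 + m)) by lia.
  change (hsum_mem f (S (2+m)) c) with (exists b, hsum_mem f (2+m) b /\ hplus_mem b (f (2+m)%nat) c).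
  rewrite (Hz m).
  split.
  - intros [b [Hb Hp]].
    apply hplus_zero_r in Hp; [|eapply hsum_nonneg; eauto]. subst. apply IH; auto.
  - intros H. exists c. split; [apply IH; auto|].
    apply hplus_zero_r; [|auto]. eapply hsum_nonneg; [eauto|]. apply IH; eauto.
Qed.

Lemma hsum_two f c : (forall k, 0 <= f k) -> (hsum_mem f 2 c <-> hplus_mem (f 0%nat) (f 1%nat) c).
Proof.
  intros Hf; simpl; split.
  - intros [b [[b0 [-> H0]] H1]]. apply hplus_zero_l in H0; auto. subst; auto.
  - intros H. exists (f 0%nat). split; auto. exists 0. split; auto.
    apply hplus_zero_l; auto.
Qed.

Lemma hprod_char r q e : 0 <= r -> (forall i, 0 <= q i) ->
  (hprod_mem (mkpoly [r; 1]) q e <->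
   e 0%nat = r * q 0%nat /\ forall i, hplus_mem (r * q (S i)) (q i) (e (S i))).
Proof.
  intros Hr Hq. unfold hprod_mem.
  assert (Hf : forall i k, 0 <= mkpoly [r; 1] k * q (i - k)%nat).
  { intros i k. apply Rmult_le_pos; auto. unfold mkpoly.
    destruct k as [|[|k]]; simpl; try destruct k; lra. }
  assert (Hs : forall i c, hsum_mem (fun k => mkpoly [r; 1] k * q (S i - k)%nat) (S (S i)) c
     <-> hplus_mem (r * q (S i)) (q i) c).
  { intros i c. replace (S (S i)) with (2 + i)%nat by lia.
    rewrite hsum_tail; auto.
    - rewrite hsum_two; auto. unfold mkpoly; simpl.
      replace (S i - 0)%nat with (S i) by lia. replace (S i - 1)%nat with i by lia. rewrite Rmult_1_l. rewrite Nat.sub_0_r. tauto.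
    - intros k. unfold mkpoly; simpl. destruct k; simpl; lra. }
  split.
  - intros H. split.
    + specialize (H 0%nat). simpl in H. destruct H as [b [-> Hb]].
      apply hplus_zero_l in Hb; [|exact (Hf 0%nat 0%nat)]. rewrite Hb. unfold mkpoly; simpl. ring.
    + intros i. apply Hs. apply H.
  - intros [H0 H1] i. destruct i as [|i].
    + simpl. exists 0. split; auto. apply hplus_zero_l; [exact (Hf 0%nat 0%nat)|].
      rewrite H0. unfold mkpoly; simpl. ring.
    + apply Hs. apply H1.
Qed.

Lemma hplus_to_zero a b : 0 <= a -> 0 <= b -> hplus_mem a b 0 -> a = b.
Proof.
  intros Ha Hb [[Hn H]|[H _]]; auto.
  pose proof (Rmax_l a b); pose proof (Rmax_r a b). exfalso. apply Hn. lra.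
Qed.

Theorem mainTheorem7 (r : R) (hr : 1 < r) :
  (forall q : tpoly, is_tpoly q ->
     (hprod_mem (mkpoly [r; 1]) q (mkpoly [r; 1; r; 1]) <->
      exists s, 0 <= s <= / r /\ q = mkpoly [1; s; 1]))
  /\ ~ hprod_mem (mkpoly [r; 1]) (mkpoly [1; 1; 1]) (mkpoly [r; 1; r; 1]).
Proof.
  assert (Hmain : forall q : tpoly, is_tpoly q ->
     (hprod_mem (mkpoly [r; 1]) q (mkpoly [r; 1; r; 1]) <->
      exists s, 0 <= s <= / r /\ q = mkpoly [1; s; 1])).
  { intros q [Hq [N HN]]. rewrite hprod_char; [|lra|auto]. split.
    - intros [H0 H1]. unfold mkpoly in H0; simpl in H0.
      assert (Hq0 : q 0%nat = 1) by nra.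
      pose proof (H1 0%nat) as Ha. unfold mkpoly in Ha; simpl in Ha. rewrite Hq0 in Ha.
      assert (Hrq1 : r * q 1%nat <= 1).
      { destruct Ha as [[_ Ha]|[Ha _]]; [|lra]. rewrite Ha. apply Rmax_l. }
      pose proof (Hq 1%nat). pose proof (Hq 2%nat).
      pose proof (H1 1%nat) as Hb. unfold mkpoly in Hb; simpl in Hb.
      assert (Hq2 : q 2%nat = 1).
      { destruct Hb as [[Hn Hb]|[Hb Hc]]; [|nra].
        unfold Rmax in Hb. destruct (Rle_dec (r * q 2%nat) (q 1%nat)); nra. }
      assert (Htail : forall k i, (3 <= i)%nat -> (N <= i + k)%nat -> q i = 0).
      { induction k as [|k IH]; intros i Hi HNi.
        - apply HN; lia.
        - pose proof (H1 i) as Hc.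
          assert (He : mkpoly [r; 1; r; 1] (S i) = 0).
          { unfold mkpoly. destruct i as [|[|[|i]]]; try lia. simpl. destruct i; reflexivity. }
          rewrite He in Hc. apply hplus_to_zero in Hc; [|pose proof (Hq (S i)); nra|auto].
          rewrite <- Hc. rewrite (IH (S i)); [ring|lia|lia]. }
      exists (q 1%nat). split.
      + split; auto. apply Rmult_le_reg_l with r; [lra|]. rewrite Rinv_r; lra.
      + apply functional_extensionality. intros i. unfold mkpoly.
        destruct i as [|[|[|i]]]; simpl; auto.
        rewrite (Htail N (S (S (S i)))); [destruct i; reflexivity|lia|lia].
    - intros [s [[Hs1 Hs2] ->]].
      assert (Hrs : r * s <= 1).
      { apply Rmult_le_compat_l with (r := r) in Hs2; [|lra]. rewrite Rinv_r in Hs2; lra. }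
      unfold mkpoly; simpl. split; [ring|].
      intros i. destruct i as [|[|[|[|i]]]]; simpl.
      + destruct (Req_dec (r * s) 1) as [E|E].
        * right; lra.
        * left; split; auto. symmetry; apply Rmax_right; lra.
      + left. split; [nra|]. rewrite Rmax_left; nra.
      + left. split; [lra|]. symmetry; apply Rmax_right; lra.
      + right. lra.
      + destruct i; simpl; right; lra. }
  split; auto.
  intros H. apply Hmain in H.
  - destruct H as [s [[_ Hs] E]].
    assert (Hs1 : s = 1).
    { pose proof (f_equal (fun f => f 1%nat) E) as E1. unfold mkpoly in E1; simpl in E1. lra. }
    subst s. assert (/ r < 1) by (apply Rmult_lt_reg_l with r; [lra|]; rewrite Rinv_r; lra). lra.
  - split.
    + intros i. unfold mkpoly. destruct i as [|[|[|i]]]; simpl; try lra. destruct i; lra.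
    + exists 3%nat. intros i Hi. unfold mkpoly. destruct i as [|[|[|i]]]; try lia. simpl. destruct i; reflexivity.
Qed.
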